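(* Let $\partial$ be a quasi-elementary $M_{A,B}$-differential with associated sets $P\subset B$, $X\subset A\setminus B$ and set $H(\partial)$ of $\partial$-boundary homologically essential elements. If $p\in H(\partial)$ appears (with nonzero coefficient) in $\partial(x)$ for some $x\in X$, then $x$ and $p$ form a $\partial'$-pair, where $\partial'$ is $\partial$ regarded as an $M_{A'}$-differential.
   Context: $\mathbb E$ a field; $A$ a finite linearly ordered graded set, $\mathbb E(A)$ the graded vector space with basis $A$; an $M$-differential is a degree $-1$ map with $\partial^2=0$ sending each basis element into the span of strictly smaller basis elements. For $B\subset A$ with $\partial\mathbb E(B)\subset\mathbb E(B)$, $\partial$ is an $M_{A,B}$-differential; $\partial_B$ is its restriction and $\partial_{A\setminus B}$ the induced differential on $\mathbb E(A)/\mathbb E(B)\cong\mathbb E(A\setminus B)$. An $M$-differential is elementary if every basis element maps to $0$ or to a single basis element and no two basis elements map to the same one. For $\partial$ with $\partial_B,\partial_{A\setminus B}$ elementary: $Q=\{b\in B:\partial_Bb\ne0\}$, $R=\partial_B(Q)$, $P=B\setminus(Q\cup R)$, $Y=\{a\in A\setminus B:\partial_{A\setminus B}a\ne0\}$, $Z=\partial_{A\setminus B}(Y)$, $X=(A\setminus B)\setminus(Y\cup Z)$. $\partial$ is quasi-elementary if $\partial_B,\partial_{A\setminus B}$ are elementary, each $\partial(x)$, $x\in X$, contains at most one element of $P$ and with coefficient $1$, and each element of $P$ appears in at most one $\partial(x)$, $x\in X$. $H(\partial)$: writing $B=\{b_1\prec\dots\prec b_K\}$, $I_k=\iota_*H_*(\mathbb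 E(\{b_1,\dots,b_k\}),\partial_B)\cap\partial_*H_*(\mathbb E(A),\mathbb E(B),\partial)$ ($\iota_*$ from inclusion into $\mathbb E(B)$, $\partial_*$ the connecting map), $I_0=0$, and $b_k\in H(\partial)$ iff $I_k\ne I_{k-1}$. If $B=\{b_1\prec\dots\prec b_K\}$ and $A\setminus B=\{a_1\prec\dots\prec a_L\}$, $A'$ denotes the graded set $A$ with the new order $b_1\prec\dots\prec b_K\prec a_1\prec\dots\prec a_L$; an $M_{A,B}$-differential is also an $M$-differential for $A'$. For an $M$-differential $\delta$ on a linearly ordered graded basis, there is a unique elementary $M$-differential $\delta_1$ obtained from $\delta$ by conjugation with a graded automorphism preserving every initial span $\mathrm{span}\{a_1,\dots,a_i\}$ (Barannikov); $u,v$ form a $\delta$-pair if $\delta_1(u)=v$. *)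

(* Defs.v *)
From HB Require Import structures.
From mathcomp Require Import all_boot all_order all_algebra.
Set Implicit Arguments. Unset Strict Implicit. Unset Printing Implicit Defensive.
Import Order.TTheory GRing.Theory Num.Theory.
Local Open Scope ring_scope.

(* The finite linearly ordered graded set A is 'I_n, with
   a_0 < a_1 < ... < a_{n-1} (order of the index) and grading deg.
   E(A) = 'rV[F]_n (row vectors, coordinates in the basis A).
   A linear map d on E(A) is a matrix D with  d(v) = v *m D ;
   D i j = coefficient of a_j in d(a_i). *)

Section Defs.
Variables (F : fieldType) (n : nat).
Implicit Types (D G : 'M[F]_n) (B S : {set 'I_n}) (deg : 'I_n -> int).

Definition ltA : rel 'I_n := fun i j => (i < j)%N.

Definition M_diff (lt : rel 'I_n) deg D : Prop :=
  [/\ (forall i j, D i j != 0 -> deg j = deg i - 1),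
      D *m D = 0
    & (forall i j, D i j != 0 -> lt j i)].

Definition M_AB_diff deg D B : Prop :=
  M_diff ltA deg D /\ (forall i j, i \in B -> D i j != 0 -> j \in B).

(* The differential induced by D on E(S) (S = B: restriction d_B;
   S = A\B: induced differential on E(A)/E(B) ~ E(A\B)) has matrix the
   S x S block of D.  "elementary" for that induced differential: *)
Definition elementary_on S D : Prop :=
  (forall i, i \in S ->
     (forall j, j \in S -> D i j = 0) \/
     exists2 j, j \in S & D i j = 1 /\ (forall k, k \in S -> k != j -> D i k = 0))
  /\ (forall i i' j, i \in S -> i' \in S -> j \in S ->
        D i j != 0 -> D i' j != 0 -> i = i').

Definition Qset S D : {set 'I_n} := [set b in S | [exists j in S, D b j != 0]].
Definition Rset S D : {set 'I_n} := [set j in S | [exists b in S, D b j != 0]].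
Definition Pset S D : {set 'I_n} := S :\: (Qset S D :|: Rset S D).
Definition Xset B D : {set 'I_n} := Pset (~: B) D.

Definition quasi_elementary D B : Prop :=
  [/\ elementary_on B D, elementary_on (~: B) D,
      (forall x p, x \in Xset B D -> p \in Pset B D -> D x p != 0 ->
          D x p = 1 /\ (forall p', p' \in Pset B D -> D x p' != 0 -> p' = p))
    & (forall p x x', p \in Pset B D -> x \in Xset B D -> x' \in Xset B D ->
          D x p != 0 -> D x' p != 0 -> x = x')].

Definition supported (v : 'rV[F]_n) S : Prop := forall j, j \notin S -> v 0 j = 0.

(* A subspace of H(E(B)) is
   encoded by its preimage in the cycle space.  For S a prefix of B,
   I_sub D B S v  <->  v is a cycle of E(B) whose class lies in
     iota_* H(E(S), d_B)  /\  im (connecting map H(E(A),E(B)) -> H(E(B))). *)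
Definition I_sub D B S (v : 'rV[F]_n) : Prop :=
  (exists z u : 'rV[F]_n, [/\ supported z S, z *m D = 0, supported u B
                            & v = z + u *m D])
  /\ (exists c : 'rV[F]_n, supported (c *m D) B /\ v = c *m D).

Definition essential D B (p : 'I_n) : Prop :=
  p \in B /\
  ~ (forall v, I_sub D B [set b in B | (b <= p)%N] v <->
               I_sub D B [set b in B | (b < p)%N] v).

Definition ltA' B : rel 'I_n := fun i j =>
  ((i \in B) && (j \notin B)) || (((i \in B) == (j \in B)) && (i < j)%N).

(* u, v form a delta-pair (w.r.t. the order lt): delta_1(u) = v, where
   delta_1 = g^-1 delta g is the (unique, Barannikov) elementary
   M-differential conjugate to delta by a graded automorphism g preserving
   every initial span. *)
Definition is_pair (lt : rel 'I_n) deg D (u v : 'I_n) : Prop :=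
  exists G, [/\ G \in unitmx,
     (forall i j, G i j != 0 -> deg i = deg j),
     (forall i j, G i j != 0 -> j = i \/ lt j i),
     M_diff lt deg (G *m D *m invmx G)
   & elementary_on setT (G *m D *m invmx G)
     /\ (forall k, (G *m D *m invmx G) u k = (k == v)%:R)].

End Defs.

(* Main.v *)
Require Import Defs.
From mathcomp Require Import all_boot all_order all_algebra.
Import Order.TTheory GRing.Theory Num.Theory.
Local Open Scope ring_scope.
Set Implicit Arguments. Unset Strict Implicit. Unset Printing Implicit Defensive.

Lemma sum1 (R : nmodType) m (f : 'I_m -> R) j0 :
  (forall j, j != j0 -> f j = 0) -> \sum_j f j = f j0.
Proof. by move=> h; rewrite (bigD1 j0) //= big1 ?addr0 // => j /h. Qed.

Lemma DD_single (F : fieldType) n (D : 'M[F]_n) i j0 w :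
  D *m D = 0 -> (forall j, j != j0 -> D i j * D j w = 0) ->
  D i j0 * D j0 w = 0.
Proof.
move=> h0 h; have := congr1 (fun M : 'M[F]_n => M i w) h0.
by rewrite !mxE (sum1 h).
Qed.

Lemma el_row (F : fieldType) n (D : 'M[F]_n) S i j :
  elementary_on S D -> i \in S -> j \in S -> D i j != 0 ->
  D i j = 1 /\ (forall k, k \in S -> k != j -> D i k = 0).
Proof.
case=> el _ iS jS nz; case: (el i iS) => [h|[j' j'S [h1 h2]]].
  by rewrite (h j jS) eqxx in nz.
case: (eqVneq j j') => [->|ne]; first by [].
by rewrite (h2 j jS ne) eqxx in nz.
Qed.

Lemma el_col (F : fieldType) n (D : 'M[F]_n) S i i' j :
  elementary_on S D -> i \in S -> i' \in S -> j \in S -> D i j != 0 -> D i' j != 0 -> i = i'.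
Proof. by case=> _ h; apply: h. Qed.

Lemma notQ (F : fieldType) n (D : 'M[F]_n) (S : {set 'I_n}) (i : 'I_n) :
  i \in S -> i \notin Qset S D -> forall j, j \in S -> D i j = 0.
Proof.
move=> iS nQ j jS; apply/eqP; apply: contraNT nQ => nz.
by rewrite inE iS /=; apply/existsP; exists j; rewrite jS.
Qed.

Lemma notR (F : fieldType) n (D : 'M[F]_n) (S : {set 'I_n}) (j : 'I_n) :
  j \in S -> j \notin Rset S D -> forall i, i \in S -> D i j = 0.
Proof.
move=> jS nR i iS; apply/eqP; apply: contraNT nR => nz.
by rewrite inE jS /=; apply/existsP; exists i; rewrite iS.
Qed.

Lemma QP (F : fieldType) n (D : 'M[F]_n) (S : {set 'I_n}) (i : 'I_n) :
  reflect (i \in S /\ exists2 j, j \in S & D i j != 0) (i \in Qset S D).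
Proof.
rewrite inE; apply: (iffP andP) => [[iS /existsP [j /andP [jS nz]]]|[iS [j jS nz]]].
  by split=> //; exists j.
by split=> //; apply/existsP; exists j; rewrite jS.
Qed.

Lemma RP (F : fieldType) n (D : 'M[F]_n) (S : {set 'I_n}) (j : 'I_n) :
  reflect (j \in S /\ exists2 i, i \in S & D i j != 0) (j \in Rset S D).
Proof.
rewrite inE; apply: (iffP andP) => [[jS /existsP [i /andP [iS nz]]]|[jS [i iS nz]]].
  by split=> //; exists i.
by split=> //; apply/existsP; exists i; rewrite iS.
Qed.

Lemma PsetP (F : fieldType) n (D : 'M[F]_n) (S : {set 'I_n}) (i : 'I_n) :
  i \in Pset S D = [&& i \in S, i \notin Qset S D & i \notin Rset S D].
Proof. by rewrite !inE negb_or andbC andbA; case: (i \in S); rewrite ?andbF ?andbT. Qed.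

Lemma ncl (F : fieldType) n (D : 'M[F]_n) (B : {set 'I_n}) :
  (forall i j, i \in B -> D i j != 0 -> j \in B) ->
  forall i j, i \in B -> j \notin B -> D i j = 0.
Proof.
move=> hcl i j iB jB; apply/eqP; apply: contraNT jB => nz; exact: hcl nz.
Qed.

Definition setting (F : fieldType) n (D : 'M[F]_n) (B : {set 'I_n}) :=
  [/\ D *m D = 0, (forall i j, i \in B -> D i j != 0 -> j \in B),
      elementary_on B D & elementary_on (~: B) D].

Section Str.
Context (F : fieldType) (n : nat) (D : 'M[F]_n) (B : {set 'I_n}).
Hypothesis hs : setting D B.

Lemma rowB i j0 : i \in B -> j0 \in B -> D i j0 != 0 ->
  D i j0 = 1 /\ forall j, j != j0 -> D i j = 0.
Proof.
case: hs => _ hcl elB _ iB j0B nz; have [h1 h2] := el_row elB iB j0B nz.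
split=> // j ne; case: (boolP (j \in B)) => jB; first exact: h2.
exact: (ncl hcl iB jB).
Qed.

Lemma rowQ q : q \in Qset B D -> exists2 r, r \in Rset B D &
  forall j, D q j = (j == r)%:R.
Proof.
case/QP=> qB [r rB nz]; exists r; first by apply/RP; split=> //; exists q.
have [h1 h2] := rowB qB rB nz.
by move=> j; case: (eqVneq j r) => [->|ne] //; rewrite h2.
Qed.

Lemma rowR_zero r : r \in Rset B D -> forall j, D r j = 0.
Proof.
case/RP=> rB [b bB nzb] j; apply/eqP; apply: contraTT isT => nz.
case: hs => h0 hcl _ _.
have jB := hcl _ _ rB nz.
have [_ hb] := rowB bB rB nzb.
have [_ hr] := rowB rB jB nz.
have H := DD_single h0 (i := b) (j0 := r) (w := j)
  (fun k ne => ltac:(by rewrite hb // mul0r)).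
by move/eqP: H; rewrite mulf_eq0 (negbTE nzb) (negbTE nz).
Qed.

Lemma colB j i i' : j \in B -> i \in B -> i' \in B -> D i j != 0 -> D i' j != 0 -> i = i'.
Proof. by case: hs => _ _ elB _ jB iB i'B; exact: el_col elB iB i'B jB. Qed.

Lemma X_out x : x \in Xset B D -> forall j, j \notin B -> D x j = 0.
Proof.
rewrite /Xset PsetP => /and3P [xC nQ _] j jB.
by apply: (notQ xC nQ); rewrite inE.
Qed.

Lemma X_notB x : x \in Xset B D -> x \notin B.
Proof. by rewrite /Xset PsetP => /and3P [xC _ _]; rewrite inE in xC. Qed.

Lemma cycleQ i : (forall j, j \notin B -> D i j = 0) ->
  forall k, k \in Qset B D -> D i k = 0.
Proof.
move=> hout k kQ; have [r rR hk] := rowQ kQ.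
case: hs => h0 _ _ _.
have := DD_single h0 (i := i) (j0 := k) (w := r).
rewrite hk eqxx mulr1; apply=> j ne.
case: (boolP (j \in B)) => jB; last by rewrite hout ?mul0r.
case: (eqVneq (D j r) 0) => [->|nz]; first by rewrite mulr0.
case/QP: kQ => kB _; case/RP: (rR) => rB _.
have := colB rB jB kB nz; rewrite hk eqxx oner_eq0 => /(_ isT) E.
by rewrite E eqxx in ne.
Qed.


Definition ypre z := odflt z [pick y in ~: B | D y z != 0].
Definition rimg q := odflt q [pick r in B | D q r != 0].

Lemma ypre_spec z : z \in Rset (~: B) D -> ypre z \in ~: B /\ D (ypre z) z != 0.
Proof.
case/RP=> _ [y yC nz]; rewrite /ypre; case: pickP => [y' /andP [] //|].
by move/(_ y); rewrite yC nz.
Qed.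

Lemma rimg_spec q : q \in Qset B D -> rimg q \in B /\ D q (rimg q) != 0.
Proof.
case/QP=> _ [r rB nz]; rewrite /rimg; case: pickP => [r' /andP [] //|].
by move/(_ r); rewrite rB nz.
Qed.

Definition Nmx : 'M[F]_n := \matrix_(i, j)
  if i \in Qset (~: B) D then 0
  else if i \in Rset (~: B) D then (if j \in B then D (ypre i) j else 0)
  else if i \in Xset B D then (if j \in Qset B D then - D i (rimg j) else 0)
  else 0.

Definition Emx : 'M[F]_n := \matrix_(i, j)
  if (i \in B) == (j \in B) then D i j
  else if (i \in Xset B D) && (j \in Pset B D) then D i j else 0.

Lemma QC_notB i : i \in Qset (~: B) D -> i \notin B.
Proof. by case/QP; rewrite inE. Qed.
Lemma RC_notB i : i \in Rset (~: B) D -> i \notin B.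
Proof. by case/RP; rewrite inE. Qed.

Lemma N_rowB i j : i \in B -> Nmx i j = 0.
Proof.
move=> iB; rewrite mxE.
have -> : (i \in Qset (~: B) D) = false by apply: contraTF iB => /QC_notB ->.
have -> : (i \in Rset (~: B) D) = false by apply: contraTF iB => /RC_notB ->.
by have -> : (i \in Xset B D) = false by apply: contraTF iB => /X_notB ->.
Qed.

Lemma N_Y i j : i \in Qset (~: B) D -> Nmx i j = 0.
Proof. by move=> h; rewrite mxE h. Qed.

Lemma X_notQC x : x \in Xset B D -> x \notin Qset (~: B) D.
Proof. by rewrite /Xset PsetP => /and3P []. Qed.
Lemma X_notRC x : x \in Xset B D -> x \notin Rset (~: B) D.
Proof. by rewrite /Xset PsetP => /and3P []. Qed.

Lemma N_X i j : i \in Xset B D ->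
  Nmx i j = if j \in Qset B D then - D i (rimg j) else 0.
Proof.
move=> iX; rewrite mxE (negbTE (X_notQC iX)) (negbTE (X_notRC iX)) iX //.
Qed.

Lemma N_colB i j : j \notin B -> Nmx i j = 0.
Proof.
move=> jB; rewrite mxE; case: ifP => // _; case: ifP => [_|_].
  by rewrite (negbTE jB).
case: ifP => // _; case: ifP => // /QP [jB' _].
by rewrite jB' in jB.
Qed.

Lemma N_Z i j : i \notin Qset (~: B) D -> i \in Rset (~: B) D ->
  Nmx i j = D (ypre i) j - (j == i)%:R.
Proof.
move=> nQ iR; rewrite mxE (negbTE nQ) iR.
have [yC nz] := ypre_spec iR.
case: hs => _ _ _ elC.
have iC : i \in ~: B by case/RP: iR.
have [h1 h2] := el_row elC yC iC nz.
case: ifP => jB.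
  have -> : (j == i) = false by apply: contraTF jB => /eqP ->; rewrite inE in iC.
  by rewrite subr0.
case: (eqVneq j i) => [->|ne]; first by rewrite h1 subrr.
by rewrite h2 ?subr0 // inE jB.
Qed.

Lemma DD0 i k : \sum_j D i j * D j k = 0.
Proof.
case: hs => h0 _ _ _; have := congr1 (fun M : 'M[F]_n => M i k) h0.
by rewrite !mxE.
Qed.


Lemma addmulE (A C M : 'M[F]_n) i k :
  (A + C *m M) i k = A i k + \sum_j C i j * M j k.
Proof. by rewrite !mxE. Qed.

Lemma E_B i j : i \in B -> Emx i j = if j \in B then D i j else 0.
Proof.
move=> iB; rewrite mxE iB; case: (j \in B) => //=.
have -> : (i \in Xset B D) = false by apply: contraTF iB => /X_notB ->.
by [].
Qed.

Lemma E_notB i j : i \notin B ->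
  Emx i j = if j \in B then (if (i \in Xset B D) && (j \in Pset B D) then D i j else 0)
            else D i j.
Proof. by move=> iB; rewrite mxE (negbTE iB); case: (j \in B). Qed.

Lemma GD : (1%:M + Nmx) *m D = Emx *m (1%:M + Nmx).
Proof.
case: (hs) => h0 hcl elB elC.
rewrite mulmxDl mul1mx mulmxDr mulmx1; apply/matrixP => i k; rewrite !addmulE.
case: (boolP (i \in B)) => iB.
  rewrite big1 => [|j _]; last by rewrite N_rowB // mul0r.
  rewrite big1 => [|j _]; last first.
    case: (boolP (j \in B)) => jB; first by rewrite (N_rowB k jB) mulr0.
    by rewrite E_B // (negbTE jB) mul0r.
  rewrite E_B // addr0 addr0; case: ifP => // kB.
  by rewrite (ncl hcl iB (negbT kB)).
have iC : i \in ~: B by rewrite inE.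
case: (boolP (i \in Qset (~: B) D)) => iY.
  rewrite big1 => [|j _]; last by rewrite N_Y // mul0r.
  case/QP: (iY) => _ [z zC nz].
  have [h1 h2] := el_row elC iC zC nz.
  have zR : z \in Rset (~: B) D by apply/RP; split=> //; exists i.
  have zY : z \notin Qset (~: B) D.
    apply/negP => /QP [_ [w wC nzw]].
    have H := DD_single h0 (i := i) (j0 := z) (w := w)
      (fun j ne => ltac:(
        case: (boolP (j \in B)) => jB;
        [ by rewrite (@ncl _ _ _ _ hcl j w jB) ?mulr0 //; rewrite inE in wC
        | by rewrite h2 ?mul0r // inE ])).
    by move/eqP: H; rewrite mulf_eq0 (negbTE nz) (negbTE nzw).
  have yp : ypre z = i.
    have [yC nzy] := ypre_spec zR.
    exact: el_col elC yC iC zC nzy nz.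
  rewrite (sum1 (j0 := z)) => [|j ne]; last first.
    case: (boolP (j \in B)) => jB.
      have iX : i \notin Xset B D by apply: contraTN iY => /X_notQC.
      by rewrite E_notB // jB (negbTE iX) mul0r.
    by rewrite E_notB // (negbTE jB) h2 ?mul0r // inE.
  have zB : z \notin B by rewrite inE in zC.
  have iX : i \notin Xset B D by apply: contraTN iY => /X_notQC.
  rewrite N_Z // yp !E_notB // (negbTE zB) h1 mul1r (negbTE iX) addr0.
  case: (boolP (k \in B)) => kB.
    have -> : (k == z) = false by apply: contraTF kB => /eqP ->.
    by rewrite add0r subr0.
  case: (eqVneq k z) => [->|ne]; first by rewrite h1 subrr addr0.
  have kC : k \in ~: B by rewrite inE.
  by rewrite h2 // add0r subr0.
case: (boolP (i \in Rset (~: B) D)) => iZ.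
  have iX : i \notin Xset B D by apply: contraTN iZ => /X_notRC.
  have E0 : forall j, Emx i j = 0.
    move=> j; rewrite E_notB //; case: ifP => jB; first by rewrite (negbTE iX).
    by apply: (notQ iC iY); rewrite inE jB.
  rewrite (E0 k) add0r [RHS]big1 => [|j _]; last by rewrite (E0 j) mul0r.
  under eq_bigr => j _ do rewrite N_Z // mulrBl.
  rewrite sumrB DD0 (sum1 (j0 := i)) => [|j ne]; last by rewrite (negbTE ne) mul0r.
  by rewrite eqxx mul1r sub0r addrN.
have iX : i \in Xset B D by rewrite /Xset PsetP iC iY iZ.
have hout := X_out iX.
rewrite [X in _ = _ + X]big1 => [|j _]; last first.
  case: (boolP (j \in B)) => jB; first by rewrite (N_rowB k jB) mulr0.
  by rewrite E_notB // (negbTE jB) hout // mul0r.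
rewrite addr0.
under eq_bigr => j _ do rewrite N_X //.
case: (boolP (k \in Rset B D)) => kR.
  case/RP: (kR) => kB [q qB nzq].
  have qQ : q \in Qset B D by apply/QP; split=> //; exists k.
  have [rB nzr] := rimg_spec qQ.
  have [r rR hq] := rowQ qQ.
  have rk : k = r by apply/eqP; move: nzq; rewrite hq; case: (k == r); rewrite ?eqxx.
  have rq : rimg q = r by apply/eqP; move: nzr; rewrite hq; case: (rimg q == r); rewrite ?eqxx.
  rewrite (sum1 (j0 := q)) => [|j ne]; last first.
    case: ifP => jQ; last by rewrite mul0r.
    case: (eqVneq (D j k) 0) => [->|nzj]; first by rewrite mulr0.
    case/QP: jQ => jB _.
    by have := colB kB jB qB nzj nzq => E; rewrite E eqxx in ne.
  rewrite qQ rq hq -rk eqxx mulr1 addrN E_notB // kB.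
  have -> : (k \in Pset B D) = false by rewrite PsetP kR !andbF.
  by rewrite andbF.
rewrite big1 => [|j _]; last first.
  case: ifP => jQ; last by rewrite mul0r.
  case/QP: jQ => jB _.
  case: (boolP (k \in B)) => kB.
    by rewrite (notR kB kR jB) mulr0.
  by rewrite (ncl hcl jB kB) mulr0.
rewrite addr0 E_notB //; case: (boolP (k \in B)) => kB //.
rewrite iX /=; case: ifP => // kP.
apply: (cycleQ hout).
by move: kP; rewrite PsetP kB (negbTE kR) andbT /= => /negbFE.
Qed.


Lemma mulE (A C : 'M[F]_n) i k : (A *m C) i k = \sum_j A i j * C j k.
Proof. by rewrite mxE. Qed.

Lemma NN : Nmx *m Nmx = 0.
Proof.
apply/matrixP => i k; rewrite mulE [RHS]mxE big1 // => j _.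
case: (boolP (j \in B)) => jB; first by rewrite (N_rowB k jB) mulr0.
by rewrite (N_colB i jB) mul0r.
Qed.

Lemma GGi : (1%:M + Nmx) *m (1%:M - Nmx) = 1%:M.
Proof. by rewrite mulmxDl mul1mx mulmxBr mulmx1 NN subr0 subrK. Qed.

Lemma GiG : (1%:M - Nmx) *m (1%:M + Nmx) = 1%:M.
Proof. by rewrite mulmxBl mul1mx mulmxDr mulmx1 NN addr0 addrK. Qed.

Lemma G_unit : (1%:M + Nmx) \in unitmx.
Proof. by case: (mulmx1_unit GGi). Qed.

Lemma G_inv : invmx (1%:M + Nmx) = 1%:M - Nmx.
Proof.
have -> : invmx (1%:M + Nmx) = invmx (1%:M + Nmx) *m ((1%:M + Nmx) *m (1%:M - Nmx)).
  by rewrite GGi mulmx1.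
by rewrite mulmxA (mulVmx G_unit) mul1mx.
Qed.

Lemma conjE : (1%:M + Nmx) *m D *m invmx (1%:M + Nmx) = Emx.
Proof. by rewrite G_inv GD -mulmxA GGi mulmx1. Qed.

Lemma EE : Emx *m Emx = 0.
Proof.
case: hs => h0 _ _ _.
rewrite -conjE G_inv -!mulmxA (mulmxA (1%:M - Nmx)) GiG mul1mx.
by rewrite (mulmxA D D) h0 mul0mx mulmx0.
Qed.

Lemma N_nz i j : Nmx i j != 0 -> i \notin B /\ j \in B.
Proof.
move=> nz; split.
  by apply: contraNN nz => iB; rewrite N_rowB.
by apply: contraNT nz => jB; rewrite N_colB.
Qed.

Lemma N_deg (deg : 'I_n -> int) :
  (forall i j, D i j != 0 -> deg j = deg i - 1) ->
  forall i j, Nmx i j != 0 -> deg i = deg j.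
Proof.
move=> hdeg i j nz; have [iB jB] := N_nz nz.
case: (boolP (i \in Qset (~: B) D)) => iY; first by rewrite (N_Y j iY) eqxx in nz.
case: (boolP (i \in Rset (~: B) D)) => iZ.
  move: nz; rewrite N_Z //.
  have -> : (j == i) = false by apply: contraNF iB => /eqP <-.
  rewrite subr0 => nz.
  have [_ nzy] := ypre_spec iZ.
  by rewrite (hdeg _ _ nz) (hdeg _ _ nzy).
have iX : i \in Xset B D by rewrite /Xset PsetP inE iB iY iZ.
move: nz; rewrite N_X //; case: ifP => jQ; last by rewrite eqxx.
rewrite oppr_eq0 => nz.
have [_ nzr] := rimg_spec jQ.
by apply: (@addIr _ (-1)); rewrite -(hdeg _ _ nz) -(hdeg _ _ nzr).
Qed.

Lemma E_nz i j : Emx i j != 0 -> D i j != 0 /\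
  (((i \in B) == (j \in B)) || ((i \in Xset B D) && (j \in Pset B D))).
Proof.
rewrite mxE; case: ifP => [h nz|_]; first by [].
case: ifP => [h nz|_]; last by rewrite eqxx.
by [] || rewrite orbT.
Qed.


Lemma P_B j : j \in Pset B D -> j \in B.
Proof. by rewrite PsetP => /and3P []. Qed.

Lemma E_class a j : Emx a j != 0 -> D a j != 0 /\
  ((a \in B) && (j \in B) || (a \notin B) && (j \notin B) ||
   [&& a \in Xset B D, a \notin B, j \in Pset B D & j \in B]).
Proof.
move=> nz; have [nzD cl] := E_nz nz; split=> //.
case/orP: cl => [|/andP [aX jP]].
  by case: (a \in B); case: (j \in B).
by rewrite aX jP (P_B jP) (X_notB aX) !orbT.
Qed.

Lemma E_row
  (hq3 : forall x p, x \in Xset B D -> p \in Pset B D -> D x p != 0 ->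
          D x p = 1 /\ (forall p', p' \in Pset B D -> D x p' != 0 -> p' = p))
  i j : Emx i j != 0 -> Emx i j = 1 /\ forall k, k != j -> Emx i k = 0.
Proof.
case: (hs) => h0 hcl elB elC.
move=> nz; have [nzD cl] := E_nz nz.
case: (boolP (i \in B)) => iB.
  have jB : j \in B := hcl i j iB nzD.
  have [h1 h2] := rowB iB jB nzD.
  split; first by rewrite E_B // jB.
  move=> k ne; rewrite E_B //; case: ifP => // _; exact: h2.
case: (boolP (j \in B)) => jB.
  have /andP [iX jP] : (i \in Xset B D) && (j \in Pset B D).
    by move: cl; rewrite (negbTE iB) jB.
  have [h1 h] := hq3 i j iX jP nzD.
  split; first by rewrite E_notB // jB iX jP.
  move=> k ne; rewrite E_notB //; case: ifP => kB.
    case: ifP => // /andP [_ kP].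
    case: (eqVneq (D i k) 0) => // nzk.
    by rewrite (h k kP nzk) eqxx in ne.
  exact: X_out iX k (negbT kB).
have iC : i \in ~: B by rewrite inE.
have jC : j \in ~: B by rewrite inE.
have [h1 h2] := el_row elC iC jC nzD.
have iY : i \in Qset (~: B) D by apply/QP; split=> //; exists j.
have iX : i \notin Xset B D by apply: contraTN iY => /X_notQC.
split; first by rewrite E_notB // (negbTE jB).
move=> k ne; rewrite E_notB //; case: ifP => kB; first by rewrite (negbTE iX).
by apply: h2 => //; rewrite inE kB.
Qed.

Lemma E_col
  (hq4 : forall p x x', p \in Pset B D -> x \in Xset B D -> x' \in Xset B D ->
          D x p != 0 -> D x' p != 0 -> x = x')
  i i' j : Emx i j != 0 -> Emx i' j != 0 -> i = i'.
Proof.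
case: (hs) => h0 hcl elB elC.
move=> /E_class [nz c] /E_class [nz' c'].
have PnotR : forall a, a \in B -> D a j != 0 -> j \in Pset B D -> False.
  move=> a aB nza; rewrite PsetP => /and3P [jB _ /negP]; apply.
  by apply/RP; split=> //; exists a.
case: (boolP (j \in B)) => jB; move: c c'; rewrite jB ?andbF ?andbT /= ?orbF.
  case/orP=> [iB|/and3P [iX _ jP]]; case/orP=> [i'B|/and3P [i'X _ jP']].
  - exact: colB jB iB i'B nz nz'.
  - by case: (PnotR i iB nz jP').
  - by case: (PnotR i' i'B nz' jP).
  - exact: hq4 jP iX i'X nz nz'.
rewrite (negbTE jB) ?andbF ?andbT /= ?orbF => iB i'B.
have iC : i \in ~: B by rewrite inE.
have i'C : i' \in ~: B by rewrite inE.
have jC : j \in ~: B by rewrite inE.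
exact: (el_col elC iC i'C jC nz nz').
Qed.


Lemma rowmxE (A : 'M[F]_n) i (a : 'I_1) j : (delta_mx 0 i *m A) a j = A i j.
Proof. by rewrite -rowE mxE. Qed.

Lemma p_in_P x p : x \in Xset B D -> D x p != 0 -> essential D B p ->
  p \in Pset B D.
Proof.
move=> xX nz [pB ness].
rewrite PsetP pB /=; apply/andP; split.
  apply/negP => pQ; have := cycleQ (X_out xX) pQ.
  by move/eqP; rewrite (negbTE nz).
apply/negP => pR; apply: ness => v.
have p0 := rowR_zero pR.
case/RP: (pR) => _ [q qB nzq].
have qQ : q \in Qset B D by apply/QP; split=> //; exists p.
have [r rR hq] := rowQ qQ.
have rp : p = r by apply/eqP; move: nzq; rewrite hq; case: (p == r); rewrite ?eqxx.
have ep0 : delta_mx 0 p *m D = 0 :> 'rV[F]_n.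
  by apply/matrixP => a j; rewrite rowmxE p0 mxE.
have eq : delta_mx 0 q *m D = delta_mx 0 p :> 'rV[F]_n.
  apply/matrixP => a j; rewrite rowmxE hq -rp mxE [a]ord1 eqxx.
  by [].
split; case=> [[z [u [zS zc uB ve]]] cp]; split=> //.
  exists (z - z 0 p *: delta_mx 0 p), (u + z 0 p *: delta_mx 0 q); split.
  - move=> j; rewrite !inE negb_and => hj; rewrite !mxE eqxx /=.
    case: (eqVneq j p) => [->|ne]; first by rewrite mulr1 subrr.
    rewrite mulr0 subr0; apply: zS; rewrite !inE negb_and.
    case/orP: hj => [->//|]; rewrite -leqNgt => hj.
    apply/orP; right; rewrite -ltnNge ltn_neqAle hj andbT.
    by apply: contra ne => /eqP /val_inj ->.
  - by rewrite mulmxBl -scalemxAl ep0 scaler0 zc subr0.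
  - move=> j jB; rewrite !mxE uB //.
    have -> : (j == q) = false by apply: contraNF jB => /eqP ->.
    by rewrite andbF mulr0 addr0.
  - by rewrite ve mulmxDl -scalemxAl eq [_ *m D + _]addrC addrA subrK.
exists z, u; split=> // j hj; apply: zS; apply: contra hj.
by rewrite !inE => /andP [-> /ltnW ->].
Qed.

End Str.

Unset Implicit Arguments.

Lemma Gentry (F : fieldType) n (A : 'M[F]_n) i j :
  (1%:M + A) i j = (i == j)%:R + A i j.
Proof. by rewrite !mxE. Qed.

Theorem lemma3p6 (F : fieldType) (n : nat) (deg : 'I_n -> int)
    (D : 'M[F]_n) (B : {set 'I_n}) (x p : 'I_n) :
  M_AB_diff deg D B ->
  quasi_elementary D B ->
  essential D B p ->
  x \in Xset B D ->
  D x p != 0 ->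
  is_pair (ltA' B) deg D x p.
Proof.
move=> [[hdeg hD2 hlt] hcl] [elB elC hq3 hq4] ess xX nz.
have hs : setting D B by split.
have pP := p_in_P hs xX nz ess.
exists (1%:M + Nmx D B); split.
- exact: G_unit D B.
- move=> i j; rewrite Gentry; case: (eqVneq i j) => [->//|ne].
  rewrite add0r; have H := N_deg hs hdeg; exact: H.
- move=> i j; rewrite Gentry; case: (eqVneq i j) => [->|ne]; first by left.
  rewrite add0r => /N_nz [iB jB]; right.
  by rewrite /ltA' jB iB.
- rewrite (conjE hs); split.
  + by move=> i j /E_nz [/hdeg].
  + exact: EE hs.
  + move=> i j /E_nz [/hlt lt cl].
    rewrite /ltA'; case/orP: cl => [e|/andP [iX jP]].
      by move: lt; rewrite /ltA eq_sym e => ->; rewrite orbT.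
    by rewrite (P_B jP) (X_notB iX).
- rewrite (conjE hs); split; first split.
  + move=> i _; case: (pickP (fun j => Emx D B i j != 0)) => [j nzj|none].
      right; exists j; first by rewrite inE.
      have [h1 h2] := E_row hs hq3 nzj; split=> // k _; exact: h2.
    by left=> j _; apply/eqP/negbFE; rewrite none.
  + move=> i i' j _ _ _; have H := E_col hs hq4; exact: H.
  + have nzE : Emx D B x p != 0.
      by rewrite (E_notB D) ?(X_notB xX) // (P_B pP) xX pP.
    have [h1 h2] := E_row hs hq3 nzE.
    move=> k; case: (eqVneq k p) => [->|ne]; first by rewrite h1.
    by rewrite h2.
Qed.
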